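(* Let $n,k\ge1$ and $\theta>0$. Let $r_1,\dots,r_k$ be nonnegative integers with $r:=\sum_{i=1}^k r_i\le n$ and $\kappa:=\sum_{i=1}^k ir_i\le k$. Then $$\mathbf E\left[\prod_{i=1}^k\{A_{n,k}(i)\}_{r_i}\right]=\{n\}_r\{k\}_\kappa\,\frac{\sigma_{k-\kappa}((n-r)\theta)}{\sigma_k(n\theta)}\prod_{i=1}^k\left(\frac{\sigma_i(\theta)}{i!}\right)^{r_i}.$$
   Context: Let $(\phi_m)_{m\ge1}$ be nonnegative reals with $\phi_1>0$ such that $\phi(x)=\sum_{m\ge1}\phi_m x^m/m!$ has positive radius of convergence. For $\theta>0$ define the polynomials $\sigma_k(\theta)$ by $e^{\theta\phi(x)}=1+\sum_{k\ge1}\sigma_k(\theta)x^k/k!$, with $\sigma_0\equiv1$. For integers $n,k\ge1$, let $\mathbf K_{n,k}=(K_{n,k}(1),\dots,K_{n,k}(n))$ be a random vector in $\mathbb N_0^n$ with $$\mathbf P(\mathbf K_{n,k}=(k_1,\dots,k_n))=\frac{k!}{\sigma_k(n\theta)}\prod_{m=1}^n\frac{\sigma_{k_m}(\theta)}{k_m!}\quad\text{for } k_1+\dots+k_n=k.$$ For $i=0,\dots,k$ let $A_{n,k}(i):=\#\{m:K_{n,k}(m)=i\}$. The falling factorial is $\{a\}_l=a(a-1)\cdots(a-l+1)$, with $\{a\}_0=1$. *)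

(* Defs.v *)
From HB Require Import structures.
From mathcomp Require Import all_boot all_order all_algebra.
From mathcomp Require Import all_classical all_reals all_analysis.
Set Implicit Arguments. Unset Strict Implicit. Unset Printing Implicit Defensive.
Import Order.TTheory GRing.Theory Num.Theory numFieldNormedType.Exports.
Local Open Scope ring_scope.

Section Defs.
Variable R : realType.
(* phi : nat -> R, with phi m = phi_m for m >= 1 (phi 0 is ignored). *)
Variable phi : nat -> R.

Definition phi_term (x : R) (m : nat) : R :=
  if m is 0 then 0 else phi m * x ^+ m / (m`!)%:R.

Definition phi_pos_radius : Prop :=
  exists2 x : R, 0 < x & cvgn (series (phi_term x)).

Definition phi_poly (k : nat) : {poly R} :=
  \poly_(i < k.+1) (if i is 0 then 0 else phi i / (i`!)%:R).

(* sigma_k(theta) = k! [x^k] exp(theta phi(x))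
                  = k! sum_{j=0}^{k} theta^j/j! [x^k] phi(x)^j
   (formal power series coefficient; phi has no constant term, so only
    j <= k contribute and truncating phi at degree k does not change [x^k]) *)
Definition sigma (k : nat) (theta : R) : R :=
  (k`!)%:R * \sum_(j < k.+1) theta ^+ j / (j`!)%:R * ((phi_poly k) ^+ j)`_k.

(* P(K_{n,k} = v), for v = (k_1,...,k_n) with k_1 + ... + k_n = k *)
Definition probK (n k : nat) (theta : R) (v : {ffun 'I_n -> 'I_k.+1}) : R :=
  (k`!)%:R / sigma k (n%:R * theta) *
  \prod_(m < n) (sigma (v m) theta / ((v m)`!)%:R).

(* the support: vectors in N_0^n summing to k (entries are automatically <= k) *)
Definition supportK (n k : nat) (v : {ffun 'I_n -> 'I_k.+1}) : bool :=
  (\sum_(m < n) (v m : nat))%N == k.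

Definition A_of (n k : nat) (v : {ffun 'I_n -> 'I_k.+1}) (i : nat) : nat :=
  #|[set m : 'I_n | (v m : nat) == i]|.

Definition EK (n k : nat) (theta : R) (f : {ffun 'I_n -> 'I_k.+1} -> R) : R :=
  \sum_(v : {ffun 'I_n -> 'I_k.+1} | supportK v) probK theta v * f v.

End Defs.

(* Main.v *)
Require Import Defs.
From HB Require Import structures.
From mathcomp Require Import all_boot all_order all_algebra.
From mathcomp Require Import all_classical all_reals all_analysis.
From mathcomp Require Import ring zify.
Import Order.TTheory GRing.Theory Num.Theory.
Local Open Scope ring_scope.

Section S1.
Variable R : realType.

Definition agree (d : nat) (p q : {poly R}) := forall m, (m <= d)%N -> p`_m = q`_m.

Lemma agreeM d p p' q q' : agree d p p' -> agree d q q' -> agree d (p * q) (p' * q').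
Proof.
move=> hp hq m hm; rewrite !coefM; apply: eq_bigr => j _.
have hj := ltn_ord j.
rewrite hp ?hq //; lia.
Qed.

Arguments agreeM {d p p' q q'}.

Lemma agreeX d p q j : agree d p q -> agree d (p ^+ j) (q ^+ j).
Proof.
move=> h; elim: j => [|j IH]; first by move=> m _.
by rewrite !exprS; apply: agreeM.
Qed.

Lemma agree_trans d p q s : agree d p q -> agree d q s -> agree d p s.
Proof. by move=> h1 h2 m hm; rewrite h1 ?h2. Qed.

Arguments agree_trans {d p q s}.

Lemma coefX_low (p : {poly R}) j m : p`_0 = 0 -> (m < j)%N -> (p ^+ j)`_m = 0.
Proof.
move=> p0; elim: j m => [//|j IH] m hm.
rewrite exprSr coefM big1 // => l _.
case: (ltnP l j) => hl; first by rewrite IH // mul0r.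
have hl2 := ltn_ord l.
have -> : (m - l = 0)%N by lia.
by rewrite p0 mulr0.
Qed.

Lemma tri_aux (h : nat -> nat -> R) N :
  \sum_(s < N) \sum_(j < s.+1) h j (s - j)%N = \sum_(j < N) \sum_(l < N - j) h j l.
Proof.
elim: N => [|N IH]; first by rewrite !big_ord0.
rewrite big_ord_recr /= IH.
rewrite [RHS](eq_bigr (fun j : 'I_N.+1 => \sum_(l < N - j) h j l + h j (N - j)%N)); last first.
  move=> j _; rewrite subSn ?big_ord_recr //; by rewrite -ltnS ltn_ord.
rewrite big_split /= [X in _ = X + _]big_ord_recr /= subnn big_ord0 addr0.
done.
Qed.

Lemma tri (h : nat -> nat -> R) N : (forall j l, (N < j + l)%N -> h j l = 0) ->
  \sum_(j < N.+1) \sum_(l < N.+1) h j l = \sum_(s < N.+1) \sum_(j < s.+1) h j (s - j)%N.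
Proof.
move=> hz; rewrite tri_aux; apply: eq_bigr => j _.
rewrite [RHS](big_ord_widen N.+1 (h j)) ?leq_subr // [RHS]big_mkcond /=; apply: eq_bigr => l _.
case: ifP => // /negbT hl; rewrite hz //; lia.
Qed.

Variable phi : nat -> R.
Variable k : nat.

Definition gp (a : R) : {poly R} :=
  \sum_(j < k.+1) (a ^+ j / (j`!)%:R) *: (phi_poly phi k) ^+ j.

Lemma Q0 : (phi_poly phi k)`_0 = 0.
Proof. by rewrite coef_poly. Qed.

Lemma fact_neq0 n : ((n`!)%:R : R) != 0.
Proof. by rewrite pnatr_eq0 -lt0n fact_gt0. Qed.

Lemma sigma_g a i : (i <= k)%N -> sigma phi i a / (i`!)%:R = (gp a)`_i.
Proof.
move=> hi; rewrite /sigma mulrC mulKf ?fact_neq0 //.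
rewrite /gp coef_sum.
rewrite (big_ord_widen k.+1 (fun j => a ^+ j / (j`!)%:R * ((phi_poly phi i) ^+ j)`_i)) // big_mkcond /=.
apply: eq_bigr => j _; rewrite coefZ; case: ifP => hj.
  congr (_ * _); rewrite (@agreeX i _ (phi_poly phi k)) // => m hm.
  have h1 : (m < i.+1)%N by rewrite ltnS.
  have h2 : (m < k.+1)%N by rewrite ltnS (leq_trans hm hi).
  by rewrite !coef_poly h1 h2.
by rewrite coefX_low ?mulr0 ?Q0 //; move/negbT: hj; lia.
Qed.

Lemma gp_add a b : agree k (gp a * gp b) (gp (a + b)).
Proof.
move=> m hm.
rewrite /gp mulr_suml coef_sum.
under eq_bigr do rewrite mulr_sumr coef_sum.
under eq_bigr do under eq_bigr do rewrite -scalerAl -scalerAr !coefZ -exprD mulrA.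
rewrite (tri (fun j l => a ^+ j / (j`!)%:R * (b ^+ l / (l`!)%:R) * ((phi_poly phi k) ^+ (j + l))`_m)); last first.
  by move=> j l hjl; rewrite coefX_low ?mulr0 ?Q0 //; lia.
rewrite coef_sum; apply: eq_bigr => s _; rewrite coefZ.
rewrite (eq_bigr (fun j : 'I_s.+1 => a ^+ j / (j`!)%:R * (b ^+ (s - j) / ((s - j)`!)%:R) * ((phi_poly phi k) ^+ s)`_m)); last first.
  by move=> j _; rewrite subnKC // -ltnS ltn_ord.
rewrite -mulr_suml; congr (_ * _).
rewrite addrC exprDn mulr_suml; apply: eq_bigr => j _ /=.
have hj : (j <= s)%N by rewrite -ltnS ltn_ord.
have H : (('C(s, j))%:R * ((j`!)%:R * ((s - j)`!)%:R) = (s`!)%:R :> R).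
  by rewrite -!natrM bin_fact.
rewrite -H.
have hC : (('C(s, j))%:R : R) != 0 by rewrite pnatr_eq0 -lt0n bin_gt0.
have h1 := fact_neq0 j; have h2 := fact_neq0 (s - j).
rewrite -mulr_natr; field.
by rewrite hC h1 h2.
Qed.

Lemma gp0 : gp 0 = 1.
Proof.
rewrite /gp big_ord_recl /= big1 ?addr0.
  by rewrite !expr0 fact0 divr1 scale1r.
by move=> j _; rewrite expr0n /= mul0r scale0r.
Qed.

Lemma gpN N a : agree k (gp a ^+ N) (gp (N%:R * a)).
Proof.
elim: N => [|N IH]; first by rewrite expr0 mul0r gp0 => m.
have h0 : agree k (gp a) (gp a) by [].
have h1 : agree k (gp a * gp (N%:R * a)) (gp (N.+1%:R * a)).
  by rewrite -[N.+1]add1n natrD mulrDl mul1r; apply: gp_add.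
rewrite exprS; exact: agree_trans (agreeM h0 IH) h1.
Qed.

Lemma coef_pow_sum (e : nat -> R) N K :
 ((\poly_(i < k.+1) e i) ^+ N)`_K =
 \sum_(v : {ffun 'I_N -> 'I_k.+1} | (\sum_(m < N) (v m : nat))%N == K)
    \prod_(m < N) e (v m).
Proof.
rewrite -[in LHS](card_ord N) -prodr_const poly_def bigA_distr_bigA coef_sum [RHS]big_mkcond /=.
apply: eq_bigr => v _.
rewrite (eq_bigr (fun m => (e (v m))%:P * 'X^(v m))); last by move=> m _; rewrite mul_polyC.
rewrite big_split /= -rmorph_prod prodrXr coefCM coefXn eq_sym.
by case: (_ == _); rewrite ?mulr1 ?mulr0.
Qed.

Lemma S_sigma theta N K : (K <= k)%N ->
  \sum_(v : {ffun 'I_N -> 'I_k.+1} | (\sum_(m < N) (v m : nat))%N == K)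
     \prod_(m < N) (sigma phi (v m) theta / ((v m)`!)%:R)
  = sigma phi K (N%:R * theta) / (K`!)%:R.
Proof.
move=> hK; rewrite -(coef_pow_sum (fun i => sigma phi i theta / (i`!)%:R)) sigma_g //.
have H : agree k ((\poly_(i < k.+1) (sigma phi i theta / (i`!)%:R)) ^+ N) (gp (N%:R * theta)).
  apply: agree_trans (gpN N theta); apply: agreeX => m hm.
  by rewrite coef_poly ltnS hm sigma_g.
exact: H.
Qed.

End S1.

Set Implicit Arguments. Unset Strict Implicit.

Lemma ffact_succ a r : (a.+1 ^_ r = a ^_ r + r * a ^_ r.-1)%N.
Proof.
case: r => [|s] //=; rewrite ffactSS ffactnSr.
case: (leqP s a) => h.
  have -> : (a.+1 = (a - s) + s.+1)%N by lia.
  by rewrite mulnDl mulnC.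
by rewrite ffact_small // !muln0 mul0n.
Qed.

Section S2.
Variable R : realType.
Variable e : nat -> R.
Variable k : nat.

Definition cons n (j : 'I_k.+1) (w : {ffun 'I_n -> 'I_k.+1}) : {ffun 'I_n.+1 -> 'I_k.+1} :=
  [ffun m : 'I_n.+1 => if unlift ord0 m is Some m' then w m' else j].
Definition tl n (v : {ffun 'I_n.+1 -> 'I_k.+1}) : {ffun 'I_n -> 'I_k.+1} :=
  [ffun m => v (lift ord0 m)].

Lemma cons0 n j (w : {ffun 'I_n -> 'I_k.+1}) : cons j w ord0 = j.
Proof. by rewrite ffunE unlift_none. Qed.

Lemma consS n j (w : {ffun 'I_n -> 'I_k.+1}) m : cons j w (lift ord0 m) = w m.
Proof. by rewrite ffunE liftK. Qed.

Lemma sum_split n (H : {ffun 'I_n.+1 -> 'I_k.+1} -> R) :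
  \sum_v H v = \sum_(j : 'I_k.+1) \sum_(w : {ffun 'I_n -> 'I_k.+1}) H (cons j w).
Proof.
rewrite pair_big /= (reindex (fun p : 'I_k.+1 * {ffun 'I_n -> 'I_k.+1} => cons p.1 p.2)) //=.
exists (fun v : {ffun 'I_n.+1 -> 'I_k.+1} => (v ord0, tl v)) => [[j w] _ | v _] /=.
  by rewrite cons0; congr pair; apply/ffunP => m; rewrite ffunE consS.
apply/ffunP => m; rewrite ffunE; case: unliftP => [m'|] ->; by rewrite ?ffunE.
Qed.

Lemma sumS n j (w : {ffun 'I_n -> 'I_k.+1}) :
  (\sum_(m < n.+1) (cons j w m : nat) = j + \sum_(m < n) (w m : nat))%N.
Proof. by rewrite big_ord_recl cons0; congr addn; apply: eq_bigr => m _; rewrite consS. Qed.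

Lemma prodS n j (w : {ffun 'I_n -> 'I_k.+1}) :
  \prod_(m < n.+1) e (cons j w m) = e j * \prod_(m < n) e (w m).
Proof. by rewrite big_ord_recl cons0; congr (_ * _); apply: eq_bigr => m _; rewrite consS. Qed.

Lemma A_ofE n (v : {ffun 'I_n -> 'I_k.+1}) i : A_of v i = (\sum_m ((v m : nat) == i))%N.
Proof.
rewrite /A_of -sum1_card big_mkcond /=; apply: eq_bigr => m _.
by rewrite inE; case: (_ == _).
Qed.

Lemma A_ofS n j (w : {ffun 'I_n -> 'I_k.+1}) i :
  A_of (cons j w) i = ((j == i :> nat) + A_of w i)%N.
Proof.
rewrite !A_ofE big_ord_recl cons0; congr addn; apply: eq_bigr => m _; by rewrite consS.
Qed.

Lemma split_cond n K (G : {ffun 'I_n.+1 -> 'I_k.+1} -> R) :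
  \sum_(v : {ffun 'I_n.+1 -> 'I_k.+1} | (\sum_m (v m : nat))%N == K) G v =
  \sum_(j < k.+1) (if (j <= K)%N then
      \sum_(w : {ffun 'I_n -> 'I_k.+1} | (\sum_m (w m : nat))%N == (K - j)%N) G (cons j w)
    else 0).
Proof.
rewrite big_mkcond sum_split; apply: eq_bigr => j _.
case: leqP => hj.
  rewrite [RHS]big_mkcond; apply: eq_bigr => w _.
  by rewrite sumS -{1}(subnKC hj) eqn_add2l.
rewrite big1 // => w _; rewrite sumS.
have -> : (j + \sum_(m < n) (w m : nat) == K)%N = false by apply/negbTE; lia.
done.
Qed.

Definition ff n (r : nat -> nat) (v : {ffun 'I_n -> 'I_k.+1}) : R :=
  \prod_(1 <= i < k.+1) ((A_of v i) ^_ (r i))%:R.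
Definition FF n K r : R :=
  \sum_(v : {ffun 'I_n -> 'I_k.+1} | (\sum_m (v m : nat))%N == K) (\prod_m e (v m)) * ff r v.
Definition SS n K : R :=
  \sum_(v : {ffun 'I_n -> 'I_k.+1} | (\sum_m (v m : nat))%N == K) \prod_m e (v m).
Definition rr (r : nat -> nat) := (\sum_(1 <= i < k.+1) r i)%N.
Definition kap (r : nat -> nat) := (\sum_(1 <= i < k.+1) i * r i)%N.
Definition Er (r : nat -> nat) := \prod_(1 <= i < k.+1) e i ^+ r i.
Definition dec (r : nat -> nat) (j : nat) := fun i => if i == j then (r i).-1 else r i.

Lemma SS_rec n K : SS n.+1 K =
  \sum_(j < k.+1) (if (j <= K)%N then e j * SS n (K - j)%N else 0).
Proof.
rewrite /SS split_cond; apply: eq_bigr => j _; case: ifP => // _.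
by rewrite mulr_sumr; apply: eq_bigr => w _; rewrite prodS.
Qed.

Lemma ff_cons n j (w : {ffun 'I_n -> 'I_k.+1}) r :
  ff r (cons j w) = ff r w + (if (0 < j)%N then (r j)%:R * ff (dec r j) w else 0).
Proof.
have E : forall r', \prod_(1 <= i < k.+1) ((A_of (cons j w) i) ^_ (r' i))%:R =
   \prod_(1 <= i < k.+1) (((j == i :> nat) + A_of w i) ^_ (r' i))%:R :> R.
  by move=> r'; apply: eq_bigr => i _; rewrite A_ofS.
rewrite /ff E; case: (posnP j) => hj.
  rewrite addr0; apply: eq_big_nat => i /andP[hi _].
  by rewrite hj (_ : (0 == i) = false) //; lia.
have hjk := ltn_ord j.
have mem : (j : nat) \in index_iota 1 k.+1 by rewrite mem_index_iota hj.
rewrite !(bigD1_seq (j : nat)) ?iota_uniq //= /dec eqxx.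
have P12 : \prod_(i <- index_iota 1 k.+1 | i != j) (((j == i :> nat) + A_of w i) ^_ (r i))%:R
   = \prod_(i <- index_iota 1 k.+1 | i != j) ((A_of w i) ^_ (r i))%:R :> R.
  by apply: eq_bigr => i hij; rewrite eq_sym (negbTE hij).
have P13 : \prod_(i <- index_iota 1 k.+1 | i != j)
      ((A_of w i) ^_ (if i == j then (r i).-1 else r i))%:R
   = \prod_(i <- index_iota 1 k.+1 | i != j) ((A_of w i) ^_ (r i))%:R :> R.
  by apply: eq_bigr => i hij; rewrite (negbTE hij).
rewrite P12 P13 (_ : (true + A_of w j)%N = (A_of w j).+1) // ffact_succ natrD natrM; ring.
Qed.

Lemma FF_rec n K r : FF n.+1 K r = \sum_(j < k.+1) (if (j <= K)%N then
   e j * (FF n (K - j)%N r + (if (0 < j)%N then (r j)%:R * FF n (K - j)%N (dec r j) else 0))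
   else 0).
Proof.
rewrite /FF split_cond; apply: eq_bigr => j _; case: ifP => // _.
rewrite (eq_bigr (fun w : {ffun 'I_n -> 'I_k.+1} => e j * (\prod_m e (w m) * ff r w) +
   (if (0 < j)%N then e j * (r j)%:R * (\prod_m e (w m) * ff (dec r j) w) else 0))); last first.
  by move=> w _; rewrite prodS ff_cons; case: ifP => _; ring.
rewrite big_split /= -mulr_sumr mulrDr; congr (_ + _).
case: ifP => _; last by rewrite big1 ?mulr0.
by rewrite -mulr_sumr mulrA.
Qed.

Definition GG n K r : R := (n ^_ rr r)%:R *
  (if (kap r <= K)%N then SS (n - rr r)%N (K - kap r)%N else 0) * Er r.

Lemma memj j : (0 < j)%N -> (j < k.+1)%N -> j \in index_iota 1 k.+1.
Proof. by move=> h1 h2; rewrite mem_index_iota h1. Qed.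

Lemma nsum_dec (F : nat -> nat -> nat) r j : (0 < j)%N -> (j < k.+1)%N ->
  (\sum_(1 <= i < k.+1) F i (r i) = F j (r j) + \sum_(i <- index_iota 1 k.+1 | i != j) F i (r i))%N /\
  (\sum_(1 <= i < k.+1) F i (dec r j i) = F j (r j).-1 + \sum_(i <- index_iota 1 k.+1 | i != j) F i (r i))%N.
Proof.
move=> h1 h2; rewrite !(bigD1_seq j) ?iota_uniq ?memj //= /dec eqxx; split => //.
by congr addn; apply: eq_bigr => i /negbTE ->.
Qed.

Lemma prod_dec (F : nat -> nat -> R) r j : (0 < j)%N -> (j < k.+1)%N ->
  (\prod_(1 <= i < k.+1) F i (r i) = F j (r j) * \prod_(i <- index_iota 1 k.+1 | i != j) F i (r i)) /\
  (\prod_(1 <= i < k.+1) F i (dec r j i) = F j (r j).-1 * \prod_(i <- index_iota 1 k.+1 | i != j) F i (r i)).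
Proof.
move=> h1 h2; rewrite !(bigD1_seq j) ?iota_uniq ?memj //= /dec eqxx; split => //.
by congr (_ * _); apply: eq_bigr => i /negbTE ->.
Qed.

Lemma dec_facts r j : (0 < j)%N -> (j < k.+1)%N -> (0 < r j)%N ->
  [/\ rr (dec r j) = (rr r).-1, kap (dec r j) = (kap r - j)%N, (j <= kap r)%N
    & Er r = e j * Er (dec r j)].
Proof.
move=> h1 h2 h3.
have [a1 a2] := nsum_dec (fun _ x => x) r h1 h2.
have [b1 b2] := nsum_dec (fun i x => i * x)%N r h1 h2.
have [c1 c2] := prod_dec (fun i x => e i ^+ x) r h1 h2.
have hr := prednK h3.
move: ((r j).-1) hr a1 a2 b1 b2 c1 c2 => x hr a1 a2 b1 b2 c1 c2.
rewrite -hr in a1 b1 c1.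
rewrite /rr /kap /Er a1 a2 b1 b2 c1 c2 mulnS exprS mulrA; split => //; lia.
Qed.

Lemma FF_GG0 K r : FF 0 K r = GG 0 K r.
Proof.
have hF : FF 0 K r = SS 0 K * \prod_(1 <= i < k.+1) ((0 ^_ r i)%:R : R).
  rewrite /FF /SS mulr_suml; apply: eq_bigr => v _; congr (_ * _).
  by apply: eq_bigr => i _; rewrite A_ofE big_ord0.
rewrite hF /GG; case: (eqVneq (rr r) 0) => h.
  have hz : forall i, i \in index_iota 1 k.+1 -> r i = 0.
    have : (rr r == 0)%N by rewrite h.
    rewrite /rr sum_nat_seq_eq0 => /allP hz i hi.
    by apply/eqP; exact: hz.
  have hk : kap r = 0%N.
    by rewrite /kap big_seq big1 // => i hi; rewrite hz ?muln0.
  have hE : Er r = 1.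
    by rewrite /Er big_seq big1 // => i hi; rewrite hz ?expr0.
  have hP : \prod_(1 <= i < k.+1) ((0 ^_ r i)%:R : R) = 1.
    by rewrite big_seq big1 // => i hi; rewrite hz.
  by rewrite h hk hE hP /= !subn0 mul1r mulr1.
rewrite ffact0n (negbTE h) mul0r mul0r.
have -> : \prod_(1 <= i < k.+1) ((0 ^_ r i)%:R : R) = 0.
  apply/eqP; rewrite prodf_seq_eq0.
  move: h; rewrite /rr sum_nat_seq_neq0 => /hasP [i hi /= hri].
  by apply/hasP; exists i => //=; rewrite ffact0n (negbTE hri).
by rewrite mulr0.
Qed.

Lemma FF_GG n K r : FF n K r = GG n K r.
Proof.
elim: n K r => [|n IH] K r; first exact: FF_GG0.
rewrite FF_rec.
have T1 : \sum_(j < k.+1) (if (j <= K)%N then e j * GG n (K - j)%N r else 0) =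
   (n ^_ rr r)%:R * (if (kap r <= K)%N then SS (n - rr r).+1 (K - kap r)%N else 0) * Er r.
  case: (leqP (kap r) K) => hk.
    rewrite SS_rec mulr_sumr mulr_suml; apply: eq_bigr => j _.
    rewrite /GG; case: (leqP j K) => hj.
      case: (leqP j (K - kap r)) => hj2.
        have -> : (kap r <= K - j)%N = true by lia.
        have -> : (K - j - kap r = K - kap r - j)%N by lia.
        by rewrite /=; ring.
      have -> : (kap r <= K - j)%N = false by lia.
      by rewrite /=; ring.
    have -> : (j <= K - kap r)%N = false by lia.
    by rewrite /=; ring.
  rewrite big1 ?mulr0 ?mul0r // => j _; case: ifP => // hj.
  rewrite /GG (_ : (kap r <= K - j)%N = false) ?mulr0 ?mul0r ?mulr0 //; lia.
have T2 : \sum_(j < k.+1) (if (j <= K)%N then e j *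
      (if (0 < j)%N then (r j)%:R * GG n (K - j)%N (dec r j) else 0) else 0) =
   (rr r)%:R * ((n ^_ (rr r).-1)%:R *
     (if (kap r <= K)%N then SS (n - (rr r).-1)%N (K - kap r)%N else 0) * Er r).
  have hrr : rr r = (\sum_(j < k.+1) (if (0 < j)%N then r j else 0))%N.
    rewrite -(big_mkord xpredT (fun j => if (0 < j)%N then r j else 0%N)) big_ltn //= add0n.
    by apply: eq_big_nat => i /andP[hi _]; rewrite hi.
  rewrite (_ : (rr r)%:R = \sum_(j < k.+1) ((if (0 < j)%N then r j else 0%N)%:R : R)); last by rewrite hrr natr_sum.
  rewrite mulr_suml; apply: eq_bigr => j _.
  case: (posnP j) => hj0.
    by rewrite hj0 /=; case: ifP => _; rewrite ?mulr0 ?mul0r.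
  case: (posnP (r j)) => hr0.
    rewrite hr0 /=; case: ifP => _; rewrite ?mulr0 ?mul0r ?mulr0 //.
  have [d1 d2 d3 d4] := dec_facts hj0 (ltn_ord j) hr0.
  case: (leqP j K) => hjK /=.
    rewrite /GG d1 d2 d4.
    have -> : (kap r - j <= K - j)%N = (kap r <= K)%N by apply/idP/idP => ?; lia.
    have -> : (K - j - (kap r - j) = K - kap r)%N by lia.
    ring.
  have -> : (kap r <= K)%N = false by lia.
  by rewrite /=; ring.
rewrite (eq_bigr (fun j : 'I_k.+1 => (if (j <= K)%N then e j * GG n (K - j)%N r else 0) +
   (if (j <= K)%N then e j *
      (if (0 < j)%N then (r j)%:R * GG n (K - j)%N (dec r j) else 0) else 0))); last first.
  by move=> j _; rewrite !IH; case: ifP => _; rewrite ?mulrDr ?addr0.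
rewrite big_split /= T1 T2 /GG.
case: (rr r) => [|s] /=.
  by rewrite !subn0 ffactn0 mul0r addr0.
case: (ltnP s n) => hs.
  have -> : ((n - s.+1).+1 = n - s)%N by lia.
  by rewrite ffact_succ natrD natrM subSS /=; ring.
rewrite (ffact_small (n := n) (m := s.+1)) //.
by rewrite ffact_succ (ffact_small (n := n) (m := s.+1)) // add0n natrM subSS /=; ring.
Qed.

End S2.

Unset Implicit Arguments. Set Strict Implicit.

Theorem proposition5 (R : realType) (phi : nat -> R)
  (phi_nonneg : forall m : nat, (0 < m)%N -> 0 <= phi m)
  (phi1_pos : 0 < phi 1%N)
  (phi_rad : phi_pos_radius phi)
  (n k : nat) (hn : (1 <= n)%N) (hk : (1 <= k)%N)
  (theta : R) (htheta : 0 < theta)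
  (r : nat -> nat)
  (hr : (\sum_(1 <= i < k.+1) r i <= n)%N)
  (hkappa : (\sum_(1 <= i < k.+1) i * r i <= k)%N) :
  let rr := (\sum_(1 <= i < k.+1) r i)%N in
  let kappa := (\sum_(1 <= i < k.+1) i * r i)%N in
  EK phi theta
    (fun v : {ffun 'I_n -> 'I_k.+1} => \prod_(1 <= i < k.+1) ((A_of v i) ^_ (r i))%:R)
  = (n ^_ rr)%:R * (k ^_ kappa)%:R
    * (sigma phi (k - kappa) ((n - rr)%:R * theta) / sigma phi k (n%:R * theta))
    * \prod_(1 <= i < k.+1) (sigma phi i theta / (i`!)%:R) ^+ (r i).
Proof.
move=> rr0 kap0.
have hEK : EK phi theta
    (fun v : {ffun 'I_n -> 'I_k.+1} => \prod_(1 <= i < k.+1) ((A_of v i) ^_ (r i))%:R)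
  = (k`!)%:R / sigma phi k (n%:R * theta) *
    FF (fun i => sigma phi i theta / (i`!)%:R) k n k r.
  rewrite /EK /FF mulr_sumr; apply: eq_bigr => v _.
  by rewrite /probK /ff mulrA.
rewrite hEK FF_GG /GG.
have -> : (kap k r <= k)%N = true by exact: hkappa.
rewrite /SS /= S_sigma ?leq_subr //.
rewrite -(ffact_fact hkappa) natrM.
rewrite /rr0 /kap0 /rr /kap /Er.
set s := sigma phi k (n%:R * theta).
have hf := fact_neq0 R (k - kap k r).
case: (eqVneq s 0) => hs.
  by rewrite hs invr0 !mulr0 !mul0r.
field.
by rewrite hs hf.
Qed.
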